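(* Let $(L_1,\preceq_1,\bot_1,\top_1)$ and $(L_2,\preceq_2,\bot_2,\top_2)$ be complete lattices, $(P,\leq)$ a poset, and $(\&_i,\swarrow^i,\nwarrow_i)$, $i=1,\dots,n$, adjoint triples with respect to $L_1,L_2,P$. Let $(A,B,R,\sigma)$ be a context over this frame. Then for every $a\in A$, $b\in B$, $x\in L_1$ and $y\in L_2$, $$\langle \phi_{b,y}^{\uparrow\downarrow},\phi_{b,y}^{\uparrow}\rangle \preceq \langle \phi_{a,x}^{\downarrow},\phi_{a,x}^{\downarrow\uparrow}\rangle \quad\text{if and only if}\quad x\,\&_{\sigma(a,b)}\, y\leq R(a,b).$$
   Context: An adjoint triple with respect to posets $P_1,P_2,P_3$ is a triple of maps $\&\colon P_1\times P_2\to P_3$, $\swarrow\colon P_3\times P_2\to P_1$, $\nwarrow\colon P_3\times P_1\to P_2$ such that $x\le_1 z\swarrow y \iff x\& y\le_3 z\iff y\le_2 z\nwarrow x$ for all $x\in P_1,y\in P_2,z\in P_3$. A context is a tuple $(A,B,R,\sigma)$ with $A,B$ non-empty sets, $R\colon A\times B\to P$ and $\sigma\colon A\times B\to\{1,\dots,n\}$. For $g\colon B\to L_2$ and $f\colon A\to L_1$ define $g^\uparrow(a)=\inf\{R(a,b)\swarrow^{\sigma(a,b)} g(b)\mid b\in B\}$ and $f^\downarrow(b)=\inf\{R(a,b)\nwarrow_{\sigma(a,b)} f(a)\mid a\in A\}$. A concept is a pair $\langle g,f\rangle$ with $g^\uparrow=f$ and $f^\downarrow=g$; concepts are ordered by $\langle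 g_1,f_1\rangle\preceq\langle g_2,f_2\rangle$ iff $g_1\le g_2$ pointwise. For $a\in A$, $x\in L_1$, the fuzzy-attribute $\phi_{a,x}\colon A\to L_1$ takes value $x$ at $a$ and $\bot_1$ elsewhere; for $b\in B$, $y\in L_2$, the fuzzy-object $\phi_{b,y}\colon B\to L_2$ takes value $y$ at $b$ and $\bot_2$ elsewhere. *)

(* Defs.v *)
From mathcomp Require Import all_boot all_order.
Set Implicit Arguments. Unset Strict Implicit. Unset Printing Implicit Defensive.
Import Order.Theory.
Local Open Scope order_scope.

Definition is_glb (d : Order.disp_t) (T : porderType d) (S : T -> Prop) (x : T) : Prop :=
  (forall y, S y -> x <= y) /\ (forall z, (forall y, S y -> z <= y) -> z <= x).

(* A complete lattice: a poset with an infimum operator on all subsets. *)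
Definition complete_inf (d : Order.disp_t) (T : porderType d) (inf : (T -> Prop) -> T) : Prop :=
  forall S, is_glb S (inf S).

Definition cl_bot (d : Order.disp_t) (T : porderType d) (inf : (T -> Prop) -> T) : T :=
  inf (fun _ => True).

Definition adjoint_triple (d1 d2 d3 : Order.disp_t)
  (P1 : porderType d1) (P2 : porderType d2) (P3 : porderType d3)
  (conj : P1 -> P2 -> P3) (sw : P3 -> P2 -> P1) (nw : P3 -> P1 -> P2) : Prop :=
  forall x y z, (x <= sw z y <-> conj x y <= z) /\ (conj x y <= z <-> y <= nw z x).

Definition up (d1 d2 d3 : Order.disp_t)
  (L1 : porderType d1) (L2 : porderType d2) (P : porderType d3)
  (inf1 : (L1 -> Prop) -> L1) (n : nat) (sw : 'I_n -> P -> L2 -> L1)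
  (A B : Type) (R : A -> B -> P) (sigma : A -> B -> 'I_n)
  (g : B -> L2) : A -> L1 :=
  fun a => inf1 (fun t => exists b, t = sw (sigma a b) (R a b) (g b)).

Definition down (d1 d2 d3 : Order.disp_t)
  (L1 : porderType d1) (L2 : porderType d2) (P : porderType d3)
  (inf2 : (L2 -> Prop) -> L2) (n : nat) (nw : 'I_n -> P -> L1 -> L2)
  (A B : Type) (R : A -> B -> P) (sigma : A -> B -> 'I_n)
  (f : A -> L1) : B -> L2 :=
  fun b => inf2 (fun t => exists a, t = nw (sigma a b) (R a b) (f a)).

Definition phi (T : eqType) (L : Type) (bot : L) (t : T) (v : L) : T -> L :=
  fun t' => if t' == t then v else bot.

Definition concept_le (d1 d2 : Order.disp_t) (L1 : porderType d1) (L2 : porderType d2)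
  (A B : Type) (c1 c2 : (B -> L2) * (A -> L1)) : Prop :=
  forall b, c1.1 b <= c2.1 b.

(* Main.v *)
Require Import Defs.
From mathcomp Require Import all_boot all_order.
Import Order.Theory.
Local Open Scope order_scope.

Lemma le_inf (d : Order.disp_t) (T : porderType d) (inf : (T -> Prop) -> T)
  (H : complete_inf inf) S t : t <= inf S <-> (forall s, S s -> t <= s).
Proof.
split.
- move=> Ht s Ss; apply: le_trans Ht _; exact: (proj1 (H S)).
- move=> Hs; exact: (proj2 (H S)).
Qed.

Lemma bot_le (d : Order.disp_t) (T : porderType d) (inf : (T -> Prop) -> T)
  (H : complete_inf inf) t : cl_bot inf <= t.
Proof. exact: (proj1 (H _)). Qed.

Theorem corollary14
  (d1 d2 d3 : Order.disp_t)
  (L1 : porderType d1) (L2 : porderType d2) (P : porderType d3)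
  (inf1 : (L1 -> Prop) -> L1) (inf2 : (L2 -> Prop) -> L2)
  (Hinf1 : complete_inf inf1) (Hinf2 : complete_inf inf2)
  (n : nat)
  (conj : 'I_n -> L1 -> L2 -> P) (sw : 'I_n -> P -> L2 -> L1) (nw : 'I_n -> P -> L1 -> L2)
  (Hadj : forall i, adjoint_triple (conj i) (sw i) (nw i))
  (A B : eqType) (R : A -> B -> P) (sigma : A -> B -> 'I_n)
  (a : A) (b : B) (x : L1) (y : L2) :
  let upo := up inf1 sw R sigma in
  let downo := down inf2 nw R sigma in
  let phib := phi (cl_bot inf2) b y in
  let phia := phi (cl_bot inf1) a x in
  concept_le (downo (upo phib), upo phib) (downo phia, upo (downo phia))
  <-> conj (sigma a b) x y <= R a b.
Proof.
move=> upo downo phib phia.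
have G : forall g f, (forall b', g b' <= downo f b') <-> (forall a', f a' <= upo g a').
  move=> g f; split.
  - move=> Hg a'; apply/le_inf => // s [b' ->].
    apply/(proj1 (Hadj _ _ _ _)); apply/(proj2 (Hadj _ _ _ _)).
    have := Hg b'; rewrite /downo /down => /le_inf; apply => //; by exists a'.
  - move=> Hf b'; apply/le_inf => // s [a' ->].
    apply/(proj2 (Hadj _ _ _ _)); apply/(proj1 (Hadj _ _ _ _)).
    have := Hf a'; rewrite /upo /up => /le_inf; apply => //; by exists b'.
have ext : forall g, (forall b', g b' <= downo (upo g) b').
  by move=> g; apply: (proj2 (G g (upo g))) => a'; exact: lexx.
have anti : forall f f', (forall a', f a' <= f' a') -> forall b', downo f' b' <= downo f b'.
  move=> f f' Hff'; apply: (proj2 (G _ _)) => a'; apply: le_trans (Hff' a') _.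
  by apply: (proj1 (G _ _)) => b'; exact: lexx.
rewrite /concept_le /=; split.
- move=> Hc.
  have Hy : y <= downo phia b.
    apply: le_trans (Hc b); have := ext phib b; by rewrite /phib /phi eqxx.
  apply/(proj2 (Hadj _ _ _ _)).
  move: Hy; rewrite /downo /down => /le_inf; apply => //; exists a.
  by rewrite /phia /phi eqxx.
- move=> Hxy; apply: anti => a'.
  rewrite /phia /phi; case: eqP => [->|_]; last exact: bot_le.
  apply/le_inf => // s [b' ->]; apply/(proj1 (Hadj _ _ _ _)).
  rewrite /phib /phi; case: eqP => [->|_]; first by [].
  apply/(proj2 (Hadj _ _ _ _)); exact: bot_le.
Qed.
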